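(* Let $n\ge 4$, let $K'\subseteq[k]$ with $|K'|\ge n$, let $\pi$ assign to each $n$-element subset $S\subseteq[k]$ a string $\pi(S)$ of length $n$ that is an ordering of $S$, and suppose every $(n-1)$-element subset $R\subseteq K'$ is semi-frozen, with a fixed choice of semi-freezing function $h_R$ and wildcard index $w_R$. Then for every $Q\subseteq K'$ with $|Q|=n-2$ there exists $T_Q\subseteq Q$ with $|T_Q|=n-4$ such that $h_R(t)=h_{R'}(t)$ for all $t\in T_Q$ and all $(n-1)$-element sets $R,R'\subseteq K'$ containing $Q$.
   Context: $[k]=\{1,\dots,k\}$; $\pi(S)[i]$ is the letter at position $i\in[n]$ of $\pi(S)$. For a set $R\subseteq[k]$, $\mathcal U_R$ is the set of all sets $S\subseteq[k]$ with $R\subset S$ and $|S|=|R|+1$. A set $R$ with $|R|=n-1$ is semi-frozen with semi-freezing function $h_R$ and wildcard index $w_R$ if $h_R:R\to[n]$ is one-to-one, $w_R$ is the unique index of $[n]$ not in the image of $h_R$, and for every $r\in R$ and every $S\in\mathcal U_R$, either $\pi(S)[h_R(r)]=r$ or $\pi(S)[w_R]=r$. *)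

(* Defs.v *)
(* Letters [k] are modelled by 'I_k (0-based relabeling of
   {1,...,k}); positions [n] by 'I_n. *)
From mathcomp Require Import all_boot.
Set Implicit Arguments. Unset Strict Implicit. Unset Printing Implicit Defensive.

(* pi S is the string pi(S) of length n : position i |-> letter (pi S i). *)
Definition string_assignment (k n : nat) := {set 'I_k} -> 'I_n -> 'I_k.

Definition is_ordering (k n : nat) (S : {set 'I_k}) (s : 'I_n -> 'I_k) : Prop :=
  injective s /\ forall x : 'I_k, (x \in S) = (x \in [set s i | i : 'I_n]).

Definition valid_assignment (k n : nat) (pi : string_assignment k n) : Prop :=
  forall S : {set 'I_k}, #|S| = n -> is_ordering S (pi S).

Definition in_U (k : nat) (R S : {set 'I_k}) : bool :=
  (R \proper S) && (#|S| == #|R|.+1).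

Definition semi_frozen (k n : nat) (pi : string_assignment k n)
    (R : {set 'I_k}) (h : 'I_k -> 'I_n) (w : 'I_n) : Prop :=
  [/\ #|R| = n.-1,
      {in R &, injective h},
      (forall i : 'I_n, (i \notin [set h r | r in R]) <-> i = w) &
      forall r, r \in R -> forall S, in_U R S ->
        pi S (h r) = r \/ pi S w = r].

(* Main.v *)
Require Import Defs.
From mathcomp Require Import all_boot.
From mathcomp Require Import zify.

Lemma notw_sf (k n : nat) (pi : string_assignment k n) (R : {set 'I_k}) h w :
  semi_frozen pi R h w -> forall r, r \in R -> h r != w.
Proof.
case=> _ _ Him _ r Hr; apply/eqP => E.
have := proj2 (Him (h r)) E.
by rewrite imset_f.
Qed.

Lemma keyG (k n : nat) (Q R1 R2 : {set 'I_k}) (pi : string_assignment k n)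
    (h : {set 'I_k} -> 'I_k -> 'I_n) (w : {set 'I_k} -> 'I_n) :
  valid_assignment pi ->
  semi_frozen pi R1 (h R1) (w R1) -> semi_frozen pi R2 (h R2) (w R2) ->
  #|Q| = n - 2 -> 4 <= n -> Q \subset R1 -> Q \subset R2 ->
  #|R1| = n.-1 -> #|R2| = n.-1 ->
  forall t u, t \in Q -> u \in Q -> h R2 t != h R1 t -> h R2 t != h R1 u.
Proof.
move=> Hv F1 F2 HQ Hn QR1 QR2 C1 C2 t u tQ uQ Hne; apply/eqP => Ep.
have tR1 : t \in R1 := subsetP QR1 t tQ.
have tR2 : t \in R2 := subsetP QR2 t tQ.
have uR1 : u \in R1 := subsetP QR1 u uQ.
have uR2 : u \in R2 := subsetP QR2 u uQ.
have R12 : R1 != R2.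
  by apply/eqP => E; move: Hne; rewrite E eqxx.
have cardI : #|R1 :&: R2| = n - 2.
  have h1 : n - 2 <= #|R1 :&: R2|.
    by rewrite -HQ; apply: subset_leq_card; rewrite subsetI QR1 QR2.
  have h2 : #|R1 :&: R2| < #|R1|.
    rewrite ltn_neqAle subset_leq_card ?subsetIl // andbT.
    apply/negP => /eqP E.
    have sub : R1 \subset R2.
      have : R1 :&: R2 == R1 by rewrite eqEcard subsetIl E leqnn.
      move/eqP => <-; exact: subsetIr.
    have : R1 == R2 by rewrite eqEcard sub C1 C2 leqnn.
    by rewrite (negbTE R12).
  lia.
have cardU : #|R1 :|: R2| = n by have := cardsUI R1 R2; lia.
have U1 : in_U R1 (R1 :|: R2).
  rewrite /in_U properEcard subsetUl cardU C1; apply/andP; split; [lia | apply/eqP; lia].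
have U2 : in_U R2 (R1 :|: R2).
  rewrite /in_U properEcard subsetUr cardU C2; apply/andP; split; [lia | apply/eqP; lia].
have [sinj smem] := Hv _ cardU.
have nw1 := @notw_sf _ _ _ _ _ _ F1; have nw2 := @notw_sf _ _ _ _ _ _ F2.
case: F1 => _ inj1 _ fr1; case: F2 => _ inj2 _ fr2.
set s := pi (R1 :|: R2) in sinj smem fr1 fr2.
set p := h R2 t in Ep Hne.
have vS : s p \in R1 :|: R2 by rewrite smem; apply/imsetP; exists p.
have tu : t != u by apply/eqP => E; move: Hne; rewrite Ep E eqxx.
rewrite in_setU in vS; case/orP: vS => vR.
- case: (fr1 _ vR _ U1) => E.
  + have E2 : h R1 (s p) = h R1 u by rewrite -Ep; exact: sinj.
    have E3 := inj1 _ _ vR uR1 E2.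
    case: (fr2 _ uR2 _ U2) => E4.
    * have E5 : h R2 u = p by apply: sinj; rewrite /s E4 -E3.
      have ut := inj2 _ _ uR2 tR2 E5. by rewrite ut eqxx in tu.
    * have E5 : w R2 = p by apply: sinj; rewrite /s E4 -E3.
      by move: (nw2 t tR2); rewrite -/p E5 eqxx.
  + have E5 : w R1 = p by exact: sinj.
    by move: (nw1 u uR1); rewrite -Ep E5 eqxx.
- case: (fr2 _ vR _ U2) => E.
  + have E2 : h R2 (s p) = h R2 t by exact: sinj.
    have E3 := inj2 _ _ vR tR2 E2.
    case: (fr1 _ uR1 _ U1) => E4.
    * have : s p = u by rewrite Ep.
      by rewrite E3 => tu'; rewrite tu' eqxx in tu.
    * case: (fr1 _ tR1 _ U1) => E6.
      - have E7 : h R1 t = p by apply: sinj; rewrite /s E6 -E3.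
        by rewrite E7 eqxx in Hne.
      - have : t = u by rewrite -E6 -E4.
        by move=> tu'; rewrite tu' eqxx in tu.
  + have E5 : w R2 = p by exact: sinj.
    by move: (nw2 t tR2); rewrite -/p E5 eqxx.
Qed.

Lemma ex_subset (T : finType) (A : {set T}) m :
  m <= #|A| -> exists B : {set T}, B \subset A /\ #|B| = m.
Proof.
elim: m => [|m IH] Hm.
  by exists set0; rewrite sub0set cards0.
have [B [BA cB]] := IH (ltnW Hm).
have : 0 < #|A :\: B|.
  rewrite cardsD (setIidPr BA) cB; lia.
rewrite card_gt0 => /set0Pn [x]; rewrite in_setD => /andP [xB xA].
exists (x |: B); split.
  by rewrite subUset sub1set xA BA.
by rewrite cardsU1 xB cB.
Qed.

Theorem lemma3p9 (k n : nat) (K' : {set 'I_k}) (pi : string_assignment k n)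
    (h : {set 'I_k} -> 'I_k -> 'I_n) (w : {set 'I_k} -> 'I_n) :
  4 <= n ->
  n <= #|K'| ->
  valid_assignment pi ->
  (forall R : {set 'I_k}, R \subset K' -> #|R| = n.-1 ->
     semi_frozen pi R (h R) (w R)) ->
  forall Q : {set 'I_k}, Q \subset K' -> #|Q| = n - 2 ->
    exists T : {set 'I_k},
      [/\ T \subset Q, #|T| = n - 4 &
        forall R R' : {set 'I_k},
          Q \subset R -> R \subset K' -> #|R| = n.-1 ->
          Q \subset R' -> R' \subset K' -> #|R'| = n.-1 ->
          forall t, t \in T -> h R t = h R' t].
Proof.
move=> Hn HK Hv Hsf Q QK HQ.
pose adm (R : {set 'I_k}) := [&& Q \subset R, R \subset K' & #|R| == n.-1].
have admP : forall R, adm R -> [/\ Q \subset R, R \subset K' & #|R| = n.-1].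
  by move=> R /and3P [a b /eqP c].
have G : forall R1 R2 t u, adm R1 -> adm R2 -> t \in Q -> u \in Q ->
    h R2 t != h R1 t -> h R2 t != h R1 u.
  move=> R1 R2 t u /admP [q1 k1 c1] /admP [q2 k2 c2].
  exact: (@keyG k n Q R1 R2 pi h w Hv (Hsf _ k1 c1) (Hsf _ k2 c2) HQ Hn q1 q2 c1 c2).
pose N := [set t in Q | [exists R, [exists R', adm R && adm R' && (h R t != h R' t)]]].
have NQ : N \subset Q by apply/subsetP => t; rewrite inE => /andP [].
have cN : #|N| <= 2.
  case: (set_0Vmem N) => [->|[t0 t0N]]; first by rewrite cards0.
  have [R0 aR0] : exists R0, adm R0.
    move: t0N; rewrite inE => /andP [_ /existsP [R /existsP [R' /andP [/andP [aR _] _]]]].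
    by exists R.
  have [q0 k0 c0] := admP _ aR0.
  have inj0 := Hsf _ k0 c0; case: inj0 => _ inj0 _ _.
  pose f t := h (odflt R0 [pick R | adm R && (h R t != h R0 t)]) t.
  have fP : forall t, t \in N -> exists R, [/\ adm R, h R t != h R0 t & f t = h R t].
    move=> t tN; rewrite /f; case: pickP => [R /andP [aR ne] | none] /=.
      by exists R.
    exfalso; move: tN; rewrite inE => /andP [_ /existsP [R /existsP [R' /andP [/andP [aR aR'] ne]]]].
    case E: (h R t != h R0 t).
      by have := none R; rewrite aR E.
    have := none R'; rewrite aR' /=; move/negbT: E; rewrite negbK => /eqP <-.
    by rewrite eq_sym ne.
  have injf : {in N &, injective f}.
    move=> t u tN uN; have tQ := subsetP NQ t tN; have uQ := subsetP NQ u uN.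
    have [Rt [aRt net ->]] := fP t tN; have [Ru [aRu neu ->]] := fP u uN.
    move=> E.
    have E2 : h Ru u = h Rt u.
      case: (eqVneq (h Ru u) (h Rt u)) => // ne.
      by have := G Rt Ru u t aRt aRu uQ tQ ne; rewrite E eqxx.
    have [qt kt ct] := admP _ aRt.
    have [_ injt _ _] := Hsf _ kt ct.
    by apply: injt; [exact: subsetP qt t tQ | exact: subsetP qt u uQ | rewrite E E2].
  have sub : f @: N \subset ~: (h R0 @: Q).
    apply/subsetP => y /imsetP [t tN ->]; rewrite inE.
    have tQ := subsetP NQ t tN.
    have [R [aR ne ->]] := fP t tN.
    apply/imsetP => [[u uQ E]].
    by have := G R0 R t u aR0 aR tQ uQ ne; rewrite E eqxx.
  have := subset_leq_card sub; rewrite -/(f @: N).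
  have cC := cardsC (h R0 @: Q).
  rewrite card_ord card_in_imset in cC.
    rewrite (card_in_imset injf); rewrite HQ in cC; lia.
  move=> x y xQ yQ; apply: inj0; exact: subsetP q0 _ _.
have hle : n - 4 <= #|Q :\: N| by rewrite cardsD (setIidPr NQ); lia.
have [T [TQN cT]] := @ex_subset _ (Q :\: N) (n - 4) hle.
exists T; split => //.
  by apply: (subset_trans TQN); apply: subsetDl.
move=> R R' qR kR cR qR' kR' cR' t tT.
have := subsetP TQN t tT; rewrite in_setD => /andP [tnN tQ].
apply/eqP; apply: contraNT tnN => ne.
rewrite inE tQ; apply/existsP; exists R; apply/existsP; exists R'.
by rewrite ne /adm qR kR cR qR' kR' cR' eqxx.
Qed.
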